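(* Let $k\ge1$, $s>0$, and let $R\subseteq R'$ be rectangles in $\mathbb{Z}^2$ with dimensions $(a,b)$ and $(a+\ell,b+m)$ respectively, $a,b\ge1$, $\ell,m\ge0$. Then \[ \mathbf{P}\big(D(R,R')\big)\le\exp\!\Big(-(m-2(k-1))\,g_k(as)-(\ell-2(k-1))\,g_k(bs)+\ell m\, s\,\exp\!\big(k\,(g_k(as)+g_k(bs))\big)\Big). \]
   Context: Let $q=e^{-s}$; each site of $\mathbb{Z}^2$ is independently nonempty with probability $1-q$ and empty with probability $q$. A rectangle $\{x_0,\dots,x_0+a-1\}\times\{y_0,\dots,y_0+b-1\}$ has dimensions $(a,b)$. For $R\subseteq R'$, let the left strip $L$ (resp. right strip $L'$) be the set of sites of $R'$ lying in columns strictly to the left (resp. right) of all columns of $R$, and the bottom strip $T$ (resp. top strip $T'$) the set of sites of $R'$ in rows strictly below (resp. above) all rows of $R$; these strips extend over the full height (resp. width) of $R'$, so the left and right strips together have $\ell$ columns and the top and bottom strips together have $m$ rows. $D(R,R')$ is the event that neither $L$ nor $L'$ contains $k$ consecutive columns all of whose sites are empty, and neither $T$ nor $T'$ contains $k$ consecutive rows all of whose sites are empty. Here $g_k(z)=-\log f_k(e^{-z})$, where $f_k:[0,1]\to[0,1]$ is the unique decreasing function with $f_k(x)^k-f_k(x)^{k+1}=x^k-x^{k+1}$. *)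

(* Defs.v *)
From Stdlib Require Import Reals ZArith List.
Import ListNotations.
Open Scope R_scope.

(* A configuration: w (x,y) = true iff site (x,y) is EMPTY. *)
Definition config := (Z * Z)%type -> bool.

Definition zrange (x : Z) (n : nat) : list Z :=
  map (fun i => (x + Z.of_nat i)%Z) (seq 0 n).

Definition zint (lo hi : Z) : list Z := zrange lo (Z.to_nat (hi - lo)).

Definition upd (w : config) (p : Z * Z) (v : bool) : config :=
  fun p' => if (Z.eqb (fst p') (fst p) && Z.eqb (snd p') (snd p))%bool then v else w p'.

(* Expectation of the indicator of a boolean event under the product measure
   on the listed sites: each site empty with probability q, nonempty with 1-q
   (sites outside the list keep their value in w). *)
Fixpoint probL (q : R) (sites : list (Z * Z)) (E : config -> bool) (w : config) : R :=
  match sites with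
  | nil => if E w then 1 else 0
  | p :: rest => q * probL q rest E (upd w p true)
                 + (1 - q) * probL q rest E (upd w p false)
  end.

Definition col_empty (w : config) (ys : list Z) (c : Z) : bool :=
  forallb (fun y => w (c, y)) ys.
Definition row_empty (w : config) (xs : list Z) (r : Z) : bool :=
  forallb (fun x => w (x, r)) xs.

Definition kconsec (k : nat) (empty : Z -> bool) (lo hi : Z) : bool :=
  existsb (fun c => (Z.leb (c + Z.of_nat k) hi) &&
                    forallb (fun j => empty (c + j)%Z) (zrange 0 k))%bool
          (zint lo hi).

(* R = {x0..x0+a-1} x {y0..y0+b-1},  R' = {x1..x1+a+l-1} x {y1..y1+b+m-1}.
   D(R,R'): no strip (left, right, bottom, top) contains k consecutive
   fully empty columns/rows; strips extend over the full height/width of R'. *)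
Definition D_event (k : nat) (x0 y0 x1 y1 : Z) (a b l m : nat) (w : config) : bool :=
  let xsR' := zrange x1 (a + l) in
  let ysR' := zrange y1 (b + m) in
  negb (kconsec k (col_empty w ysR') x1 x0) &&
  negb (kconsec k (col_empty w ysR') (x0 + Z.of_nat a) (x1 + Z.of_nat (a + l))) &&
  negb (kconsec k (row_empty w xsR') y1 y0) &&
  negb (kconsec k (row_empty w xsR') (y0 + Z.of_nat b) (y1 + Z.of_nat (b + m))).

Definition sites_of (x1 y1 : Z) (a b l m : nat) : list (Z * Z) :=
  list_prod (zrange x1 (a + l)) (zrange y1 (b + m)).

Definition probD (s : R) (k : nat) (x0 y0 x1 y1 : Z) (a b l m : nat) : R :=
  probL (exp (- s)) (sites_of x1 y1 a b l m) (D_event k x0 y0 x1 y1 a b l m)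
        (fun _ => false).

Definition is_fk (k : nat) (f : R -> R) : Prop :=
  (forall x, 0 <= x <= 1 -> 0 <= f x <= 1) /\
  (forall x y, 0 <= x <= 1 -> 0 <= y <= 1 -> x < y -> f y < f x) /\
  (forall x, 0 <= x <= 1 -> f x ^ k - f x ^ (k + 1) = x ^ k - x ^ (k + 1)).

Definition gk (f : R -> R) (z : R) : R := - ln (f (exp (- z))).

(* Main.v *)
Require Import Defs.
From Stdlib Require Import Reals ZArith List Lra Lia Permutation FunctionalExtensionality.
Import ListNotations.
Open Scope R_scope.

Fixpoint EL (q : R) (sites : list (Z*Z)) (X : config -> R) (w : config) : R :=
  match sites with
  | nil => X w
  | p :: rest => q * EL q rest X (upd w p true) + (1 - q) * EL q rest X (upd w p false)
  end.

Lemma probL_EL q s E w : probL q s E w = EL q s (fun w => if E w then 1 else 0) w.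
Proof. revert w; induction s; intro w; simpl; auto. rewrite !IHs. auto. Qed.

Lemma EL_app q s1 s2 X w : EL q (s1 ++ s2) X w = EL q s1 (fun w' => EL q s2 X w') w.
Proof. revert w; induction s1; intro w; simpl; auto. rewrite !IHs1. auto. Qed.

Lemma EL_ext q s X Y w : (forall w, X w = Y w) -> EL q s X w = EL q s Y w.
Proof. intro H. revert w; induction s; intro w; simpl; auto. rewrite !IHs. auto. Qed.

Lemma EL_mono q s X Y w : 0 <= q <= 1 -> (forall w, X w <= Y w) -> EL q s X w <= EL q s Y w.
Proof. intros Hq H. revert w; induction s; intro w; simpl; auto.
 apply Rplus_le_compat; apply Rmult_le_compat_l; auto; lra. Qed.

Definition indep {A} (F : config -> A) (s : list (Z*Z)) :=
  forall w p v, In p s -> F (upd w p v) = F w.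

Lemma indep_cons {A} (F : config -> A) p s : indep F (p :: s) -> indep F s.
Proof. intros H w p' v Hi. apply H. right; auto. Qed.

Lemma EL_indep q s X w : indep X s -> EL q s X w = X w.
Proof. revert w; induction s; intros w H; simpl; auto.
 rewrite !IHs by (eapply indep_cons; eauto). rewrite !H by (left; auto). ring. Qed.

Lemma EL_mul_l q s A B w : indep A s -> EL q s (fun w => A w * B w) w = A w * EL q s B w.
Proof. revert w; induction s; intros w H; simpl; auto.
 rewrite !IHs by (eapply indep_cons; eauto). rewrite !H by (left; auto). ring. Qed.

Lemma EL_if q s (c : config -> bool) A B w : indep c s ->
  EL q s (fun w => if c w then A w else B w) w = if c w then EL q s A w else EL q s B w.
Proof. revert w; induction s; intros w H; simpl; auto.
 rewrite !IHs by (eapply indep_cons; eauto). rewrite !H by (left; auto). destruct (c w); auto. Qed.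

Lemma upd_same w p v : upd w p v p = v.
Proof. unfold upd. rewrite !Z.eqb_refl. auto. Qed.

Lemma upd_other w p v p' : p' <> p -> upd w p v p' = w p'.
Proof. intro H. unfold upd. destruct p as [a b], p' as [c d]; simpl.
 destruct (Z.eqb_spec c a), (Z.eqb_spec d b); simpl; auto. subst. congruence. Qed.

Definition peq_dec (x y : Z*Z) : {x=y}+{x<>y}.
Proof. decide equality; apply Z.eq_dec. Defined.

Lemma upd_comm w p v p' v' : p <> p' -> upd (upd w p v) p' v' = upd (upd w p' v') p v.
Proof. intro H. apply functional_extensionality. intro x.
 destruct (peq_dec x p') as [->|H1].
 - rewrite upd_same, upd_other, upd_same; auto.
 - rewrite (upd_other _ _ _ _ H1). destruct (peq_dec x p) as [->|H2].
   + rewrite !upd_same. auto.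
   + rewrite !upd_other; auto.
Qed.

Lemma EL_perm q s s' X w : Permutation s s' -> EL q s X w = EL q s' X w.
Proof.
 intro HP. revert w. induction HP; intro w; simpl; auto.
 - rewrite !IHHP. auto.
 - destruct (peq_dec x y) as [->|Hxy]; [ring|].
   rewrite !(upd_comm _ y _ x) by auto. ring.
 - rewrite IHHP1, IHHP2. auto.
Qed.

Definition depon {A} (F : config -> A) (P : Z*Z -> Prop) :=
  forall w w', (forall p, P p -> w p = w' p) -> F w = F w'.

Lemma depon_indep {A} (F : config -> A) P s : depon F P -> (forall p, In p s -> ~ P p) -> indep F s.
Proof. intros H Hs w p v Hi. apply H. intros p' Hp'. apply upd_other. intro E; subst. apply (Hs p Hi Hp'). Qed.

Lemma EL_allempty q s A B w : NoDup s -> indep A s -> indep B s ->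
  EL q s (fun w => if forallb (fun p => w p) s then A w else B w) w =
  q ^ length s * A w + (1 - q ^ length s) * B w.
Proof.
 revert w; induction s as [|p s IH]; intros w Hnd HA HB; simpl; [ring|].
 inversion Hnd; subst.
 assert (E1 : forall v, EL q s (fun w0 => if andb (w0 p) (forallb (fun p0 => w0 p0) s) then A w0 else B w0) (upd w p v)
     = EL q s (fun w0 => if v then (if forallb (fun p0 => w0 p0) s then A w0 else B w0) else B w0) (upd w p v)).
 { intro v. rewrite (EL_ext q s _ (fun w0 => if w0 p then (if forallb (fun p0 => w0 p0) s then A w0 else B w0) else B w0)) by (intro; destruct (w0 p); auto).
   rewrite (EL_if q s (fun w0 => w0 p)).
   2:{ intros w' p' v' Hi. apply upd_other. intro; subst; auto. }
   rewrite (EL_if q s (fun _ => v)) by (intros ? ? ? ?; auto).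
   rewrite upd_same. auto. }
 rewrite !E1. simpl. rewrite IH; auto; try (eapply indep_cons; eauto).
 rewrite EL_indep by (eapply indep_cons; eauto). rewrite !HA, !HB by (left; auto). ring.
Qed.


Fixpoint Hf (k:nat) (p:R) (r:nat) (fl:list bool) : R :=
  match fl with
  | nil => 1
  | b :: cs => if b then p * (if Nat.ltb (S r) k then Hf k p (S r) cs else 0)
                         + (1 - p) * Hf k p 0 cs
               else Hf k p 0 cs
  end.

Fixpoint Dsum (p f : R) (t:nat) : R :=
  match t with O => 0 | S t => (1-p)/f + p/f * Dsum p f t end.

Fixpoint Sxy (y u : R) (t:nat) : R :=
  match t with O => 0 | S t => y^t + u * Sxy y u t end.

Fixpoint nbf (fl : list bool) : nat :=
  match fl with nil => O | b :: cs => ((if b then 0 else 1) + nbf cs)%nat end.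

Definition Ebd (lf : R) (k : nat) (fl : list bool) : R :=
  exp ((INR (length fl) - (INR k - 1) - INR k * INR (nbf fl)) * lf).

Lemma Sxy_diff y u t : (y - u) * Sxy y u t = y^t - u^t.
Proof. induction t; simpl; [ring|]. rewrite Rmult_plus_distr_l, <- Rmult_assoc, (Rmult_comm (y-u) u), Rmult_assoc, IHt. ring. Qed.

Lemma Sxy_same p t : p * Sxy p p t = INR t * p^t.
Proof. induction t; simpl Sxy; [simpl; ring|]. rewrite S_INR.
 replace (p * (p ^ t + p * Sxy p p t)) with (p * p^t + p * (p * Sxy p p t)) by ring.
 rewrite IHt. simpl. ring. Qed.

Lemma Dsum_S p f t : f <> 0 -> Dsum p f t * f^t = (1-p) * Sxy f p t.
Proof. intro Hf0. induction t; simpl; [ring|].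
 replace (((1 - p) / f + p / f * Dsum p f t) * (f * f ^ t)) with
   ((1-p) * f^t + p * (Dsum p f t * f^t)) by (field; auto).
 rewrite IHt. ring. Qed.

Lemma Dk_le1 k p f : (1 <= k)%nat -> 0 < p < 1 -> 0 < f <= 1 ->
  f^k - f^(k+1) = p^k - p^(k+1) -> (f = p -> INR k * (1-p) <= p) ->
  Dsum p f k <= 1.
Proof.
 intros Hk Hp Hf Hid Hfp.
 assert (Hfk : 0 < f^k) by (apply pow_lt; lra).
 pose proof (Dsum_S p f k ltac:(lra)) as HD.
 destruct (Req_dec f p) as [E|E].
 - specialize (Hfp E). subst f.
   pose proof (Sxy_same p k) as HS.
   assert (Dsum p p k * p^k * p = (1-p) * (INR k * p^k)) by (rewrite HD, <- HS; ring).
   assert (Dsum p p k * p <= p).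
   { apply Rmult_le_reg_r with (p^k); [auto|].
     replace (Dsum p p k * p * p^k) with (Dsum p p k * p^k * p) by ring. rewrite H.
     replace ((1 - p) * (INR k * p ^ k)) with ((INR k * (1-p)) * p^k) by ring.
     apply Rmult_le_compat_r; lra. }
   apply Rmult_le_reg_r with p; lra.
 - assert (HS : (f - p) * ((1-p) * Sxy f p k - f^k) = 0).
   { replace ((f - p) * ((1-p) * Sxy f p k - f^k)) with ((1-p) * ((f-p) * Sxy f p k) - (f-p)*f^k) by ring.
     rewrite Sxy_diff. rewrite !pow_add in Hid. simpl in Hid. nra. }
   apply Rmult_integral in HS. destruct HS as [HS|HS]; [lra|].
   assert (Dsum p f k * f^k = 1 * f^k) by lra.
   apply Rmult_eq_reg_r in H; lra.
Qed.

Section HB.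
Variables (k : nat) (p lf : R).
Hypothesis Hk : (1 <= k)%nat.
Hypothesis Hp : 0 <= p <= 1.
Hypothesis Hlf : lf <= 0.
Hypothesis HD : Dsum p (exp lf) k <= 1.

Definition Hc r fl := if Nat.ltb r k then Hf k p r fl else 0.

Lemma Hf_block r j rest : (r + j < k)%nat ->
  Hf k p r (repeat true j ++ false :: rest) = Hf k p 0 rest.
Proof.
 revert r. induction j; intros r Hr; simpl; auto.
 assert (E: Nat.ltb (S r) k = true) by (apply Nat.ltb_lt; lia). rewrite E.
 rewrite IHj by lia. rewrite IHj by lia. ring.
Qed.

Lemma Hf_short r j : (r + j < k)%nat -> Hf k p r (repeat true j) = 1.
Proof.
 revert r. induction j; intros r Hr; simpl; auto.
 assert (E: Nat.ltb (S r) k = true) by (apply Nat.ltb_lt; lia). rewrite E.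
 rewrite IHj by lia. rewrite IHj by lia. ring.
Qed.

Lemma nbf_app a b0 : nbf (a ++ b0) = (nbf a + nbf b0)%nat.
Proof. induction a; simpl; auto. rewrite IHa. lia. Qed.
Lemma nbf_rep j : nbf (repeat true j) = O.
Proof. induction j; simpl; auto. Qed.

Lemma Qj rest : (forall j', (j' < k)%nat -> Hf k p 0 (repeat true j' ++ rest) <= Ebd lf k (repeat true j' ++ rest)) ->
  forall j, (j <= k)%nat ->
  Hc (k - j) (repeat true j ++ rest) <=
  exp ((INR (length rest) + INR j - (INR k - 1) - INR k * INR (nbf rest)) * lf) * Dsum p (exp lf) j.
Proof.
 intros hIH j. induction j; intros Hj.
 - unfold Hc. rewrite Nat.sub_0_r, Nat.ltb_irrefl. simpl. lra.
 - unfold Hc. assert (E: Nat.ltb (k - S j) k = true) by (apply Nat.ltb_lt; lia). rewrite E.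
   simpl (repeat true (S j) ++ rest). simpl Hf.
   replace (S (k - S j)) with (k - j)%nat by lia. fold (Hc (k-j) (repeat true j ++ rest)).
   specialize (IHj ltac:(lia)). specialize (hIH j ltac:(lia)).
   unfold Ebd in hIH. rewrite app_length, repeat_length, nbf_app, nbf_rep, plus_INR in hIH. simpl (INR (0 + nbf rest)) in hIH.
   set (X := exp ((INR (length rest) + INR j - (INR k - 1) - INR k * INR (nbf rest)) * lf)) in *.
   replace (INR (length rest) + INR (S j) - (INR k - 1) - INR k * INR (nbf rest)) with
     ((INR (length rest) + INR j - (INR k - 1) - INR k * INR (nbf rest)) + 1) by (rewrite S_INR; ring).
   rewrite Rmult_plus_distr_r, Rmult_1_l, exp_plus. fold X. simpl Dsum.
   assert (Hf0 : exp lf <> 0) by (apply Rgt_not_eq, exp_pos).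
   replace (X * exp lf * ((1 - p) / exp lf + p / exp lf * Dsum p (exp lf) j)) with
     (p * (X * Dsum p (exp lf) j) + (1 - p) * X) by (field; auto).
   replace (INR (length rest) + INR j - (INR k - 1) - INR k * INR (nbf rest)) with
    (INR (length rest) + INR j - (INR k - 1) - INR k * INR (nbf rest)) in hIH by ring.
   assert (0 <= 1 - p) by lra.
   apply Rplus_le_compat; apply Rmult_le_compat_l; try lra; auto.
   eapply Rle_trans; [apply hIH|]. right. unfold X. f_equal. f_equal. ring.
Qed.

Lemma decomp : forall kk fl, (1 <= kk)%nat ->
  (exists rest, fl = repeat true kk ++ rest) \/
  (exists j rest, (j < kk)%nat /\ fl = repeat true j ++ false :: rest) \/
  (exists j, (j < kk)%nat /\ fl = repeat true j).
Proof.
 induction kk; intros fl H; [lia|].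
 destruct fl as [|b fl'].
 - right; right. exists O; split; auto; lia.
 - destruct b.
   + destruct (Nat.eq_dec kk 0) as [->|Hn].
     * left. exists fl'. reflexivity.
     * destruct (IHkk fl' ltac:(lia)) as [[r ->]|[[j [r [Hj ->]]]|[j [Hj ->]]]].
       -- left. exists r. reflexivity.
       -- right; left. exists (S j), r. split; [lia|reflexivity].
       -- right; right. exists (S j). split; [lia|reflexivity].
   + right; left. exists O, fl'. split; [lia|reflexivity].
Qed.

Lemma exp_mono (x y : R) : x <= y -> exp x <= exp y.
Proof. intro H. destruct (Req_dec x y) as [->|]; [lra|]. left; apply exp_increasing; lra. Qed.

Lemma Ebd_mono (t u : R) : u <= t -> exp (t * lf) <= exp (u * lf).
Proof. intro H. apply exp_mono. nra. Qed.

Lemma Hf_bound : forall fl, Hf k p 0 fl <= Ebd lf k fl.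
Proof.
 assert (forall n fl, (length fl <= n)%nat -> Hf k p 0 fl <= Ebd lf k fl).
 { induction n; intros fl Hl.
   - destruct fl; [|simpl in Hl; lia]. simpl. unfold Ebd. simpl.
     rewrite <- exp_0 at 1.      replace 0 with (0 * lf) by ring. apply Ebd_mono. assert (1 <= INR k) by (apply (le_INR 1); auto). lra.
   - destruct (decomp k fl Hk) as [[r ->]|[[j [r [Hj ->]]]|[j [Hj ->]]]].
     + pose proof (Qj r) as HQ.
       assert (HI : forall j', (j' < k)%nat -> Hf k p 0 (repeat true j' ++ r) <= Ebd lf k (repeat true j' ++ r)).
       { intros j' Hj'. apply IHn. rewrite length_app, repeat_length in *. lia. }
       specialize (HQ HI k (Nat.le_refl k)). rewrite Nat.sub_diag in HQ. unfold Hc in HQ.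
       assert (E: Nat.ltb 0 k = true) by (apply Nat.ltb_lt; lia). rewrite E in HQ.
       eapply Rle_trans; [apply HQ|].
       unfold Ebd. rewrite length_app, repeat_length, nbf_app, nbf_rep, plus_INR.
       assert (0 <= exp ((INR (length r) + INR k - (INR k - 1) - INR k * INR (nbf r)) * lf)) by (left; apply exp_pos).
       simpl (INR (0 + nbf r)). 
       replace (INR k + INR (length r) - (INR k - 1) - INR k * INR (nbf r)) with
          (INR (length r) + INR k - (INR k - 1) - INR k * INR (nbf r)) by ring.
       rewrite <- (Rmult_1_r (exp _)) at 2. apply Rmult_le_compat_l; auto.
     + rewrite Hf_block by lia. eapply Rle_trans; [apply IHn|].
       { rewrite length_app, repeat_length in Hl. simpl in Hl. lia. }
       unfold Ebd. apply Ebd_mono. rewrite length_app, repeat_length, nbf_app, nbf_rep. simpl length. simpl nbf.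
       replace (0 + S (nbf r))%nat with (S (nbf r)) by lia. rewrite plus_INR, !S_INR.
       assert (INR j + 1 <= INR k) by (rewrite <- S_INR; apply le_INR; lia).
       assert (0 <= INR k) by apply pos_INR. nra.
     + rewrite Hf_short by lia. unfold Ebd. rewrite nbf_rep, repeat_length. simpl (INR 0).
       rewrite <- exp_0 at 1. replace 0 with (0 * lf) by ring. apply Ebd_mono.
       assert (INR j + 1 <= INR k) by (rewrite <- S_INR; apply le_INR; lia). lra. }
 intro fl. apply (H (length fl)). lia.
Qed.
End HB.

Fixpoint NRun (k : nat) (r : nat) (fl : list bool) : bool :=
  match fl with
  | nil => true
  | b :: cs => if b then (if Nat.ltb (S r) k then NRun k (S r) cs else false) else NRun k 0 cs
  end.

Lemma forallb_map_w (w : config) (g : Z -> Z*Z) (J : list Z) :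
  forallb (fun j => w (g j)) J = forallb (fun p => w p) (map g J).
Proof. induction J; simpl; auto. rewrite IHJ; auto. Qed.

Lemma forallb_ext_in {A} (f g : A -> bool) l : (forall x, In x l -> f x = g x) -> forallb f l = forallb g l.
Proof. induction l; intro H; simpl; auto. rewrite H by (simpl; auto). rewrite IHl; auto. intros; apply H; simpl; auto. Qed.

Lemma NoDup_map_inj {A B} (g : A -> B) (l : list A) :
  (forall x y, In x l -> In y l -> g x = g y -> x = y) -> NoDup l -> NoDup (map g l).
Proof. induction l; intros Hi Hn; simpl; constructor.
 - inversion Hn; subst. intro Hin. apply in_map_iff in Hin. destruct Hin as [x [E Hx]].
   assert (x = a) by (apply Hi; auto; simpl; auto). subst; auto.
 - inversion Hn; subst. apply IHl; auto. intros; apply Hi; simpl; auto.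
Qed.

Section Line.
Variables (k : nat) (q : R) (J : list Z) (sitef : Z -> Z -> Z*Z) (cf : config -> Z -> bool).
Hypothesis Hq : 0 <= q <= 1.
Hypothesis HJ : NoDup J.
Hypothesis Hinj : forall i j i' j', sitef i j = sitef i' j' -> i = i' /\ j = j'.
Hypothesis Hcf : forall w i j v i', In j J -> cf (upd w (sitef i j) v) i' = cf w i'.

Definition lineE (w : config) (i : Z) : bool := andb (cf w i) (forallb (fun j => w (sitef i j)) J).
Definition lsites (lines : list Z) := flat_map (fun i => map (sitef i) J) lines.

Lemma cf_indep i' lines : indep (fun w => cf w i') (lsites lines).
Proof. intros w p v Hi. unfold lsites in Hi. apply in_flat_map in Hi. destruct Hi as [i [_ Hi]].
 apply in_map_iff in Hi. destruct Hi as [j [<- Hj]]. apply Hcf; auto. Qed.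

Lemma cfmap_indep lines lines' : indep (fun w => map (cf w) lines') (lsites lines).
Proof. intros w p v Hi. apply map_ext. intro i'. apply (cf_indep i' lines w p v Hi). Qed.

Lemma lineE_indep i lines : ~ In i lines -> indep (fun w => lineE w i) (lsites lines).
Proof. intros Hni w p v Hi. unfold lineE. rewrite (cf_indep i lines w p v Hi). f_equal.
 apply forallb_ext_in. intros j _. unfold lsites in Hi. apply in_flat_map in Hi. destruct Hi as [i0 [Hi0 Hi]].
 apply in_map_iff in Hi. destruct Hi as [j0 [<- _]]. apply upd_other.
 intro E. apply Hinj in E. destruct E; subst. auto. Qed.

Lemma Line_EL : forall lines r w, NoDup lines ->
  EL q (lsites lines) (fun w => if NRun k r (map (lineE w) lines) then 1 else 0) w =
  Hf k (q ^ length J) r (map (cf w) lines).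
Proof.
 induction lines as [|i lines IH]; intros r w Hnd; simpl; auto.
 inversion Hnd; subst.
 change (lsites (i :: lines)) with (map (sitef i) J ++ lsites lines).
 rewrite EL_app.
 set (G := fun w1 : config => if lineE w1 i then
      (if Nat.ltb (S r) k then Hf k (q ^ length J) (S r) (map (cf w1) lines) else 0)
      else Hf k (q ^ length J) 0 (map (cf w1) lines)).
 rewrite (EL_ext q _ _ G).
 2:{ intro w1. unfold G.
     rewrite (EL_ext q _ _ (fun w0 => if lineE w0 i then
        (if Nat.ltb (S r) k then (if NRun k (S r) (map (lineE w0) lines) then 1 else 0) else 0)
        else (if NRun k 0 (map (lineE w0) lines) then 1 else 0))).
     2:{ intro w0. simpl. destruct (lineE w0 i); auto. destruct (Nat.ltb (S r) k); auto. }
     rewrite EL_if by (apply lineE_indep; auto).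
     destruct (lineE w1 i); auto. destruct (Nat.ltb (S r) k); auto.
     apply EL_indep. intros ? ? ? ?; auto. }
 unfold G, lineE.
 assert (HND : NoDup (map (sitef i) J)).
 { apply NoDup_map_inj; auto. intros x y _ _ E. apply Hinj in E. tauto. }
 assert (Hcfi : indep (fun w0 => cf w0 i) (map (sitef i) J)).
 { intros w0 p v Hi. apply in_map_iff in Hi. destruct Hi as [j [<- Hj]]. apply Hcf; auto. }
 assert (Hmap : indep (fun w0 => map (cf w0) lines) (map (sitef i) J)).
 { intros w0 p v Hi. apply map_ext. intro. apply in_map_iff in Hi. destruct Hi as [j [<- Hj]]. apply Hcf; auto. }
 rewrite (EL_ext q _ _ (fun w0 => if cf w0 i then
     (if forallb (fun p => w0 p) (map (sitef i) J) then
        (if Nat.ltb (S r) k then Hf k (q ^ length J) (S r) (map (cf w0) lines) else 0)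
      else Hf k (q ^ length J) 0 (map (cf w0) lines))
     else Hf k (q ^ length J) 0 (map (cf w0) lines))).
 2:{ intro w0. rewrite forallb_map_w. destruct (cf w0 i); auto. }
 rewrite EL_if by auto.
 simpl Hf.
 destruct (cf w i).
 - rewrite EL_allempty; auto.
   + rewrite length_map. auto.
   + intros w0 p v Hi. rewrite (Hmap w0 p v Hi). auto.
   + intros w0 p v Hi. rewrite (Hmap w0 p v Hi). auto.
 - apply EL_indep. intros w0 p v Hi. rewrite (Hmap w0 p v Hi). auto.
Qed.
End Line.

Close Scope R_scope.

Lemma zrange_S x n : zrange x (S n) = x :: zrange (x + 1) n.
Proof. unfold zrange. simpl. rewrite Z.add_0_r. f_equal.
 rewrite <- seq_shift, map_map. apply map_ext. intro i. lia. Qed.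

Lemma zrange_0 x : zrange x 0 = [].
Proof. reflexivity. Qed.

Lemma zrange_shift x n : zrange x n = map (fun j => (x + j)%Z) (zrange 0 n).
Proof. unfold zrange. rewrite map_map. apply map_ext. intro. lia. Qed.

Lemma In_zrange z x n : In z (zrange x n) <-> (x <= z < x + Z.of_nat n)%Z.
Proof. unfold zrange. rewrite in_map_iff. split.
 - intros [i [<- Hi]]. apply in_seq in Hi. lia.
 - intro H. exists (Z.to_nat (z - x)). split; [lia|]. apply in_seq. lia. Qed.

Lemma zrange_app x n m : zrange x (n + m) = zrange x n ++ zrange (x + Z.of_nat n) m.
Proof. revert x; induction n; intro x.
 - rewrite Z.add_0_r. auto.
 - change (S n + m)%nat with (S (n + m)). rewrite !zrange_S, IHn. simpl app. f_equal. f_equal. f_equal. lia. Qed.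

Lemma length_zrange x n : length (zrange x n) = n.
Proof. unfold zrange. rewrite length_map, length_seq. auto. Qed.

Lemma NoDup_zrange x n : NoDup (zrange x n).
Proof. unfold zrange. apply NoDup_map_inj; [|apply seq_NoDup]. intros. lia. Qed.

Section KC.
Variables (k : nat) (e : Z -> bool) (hi : Z).
Hypothesis Hk : (1 <= k)%nat.

Definition Wn (c : Z) : bool := andb (Z.leb (c + Z.of_nat k) hi) (forallb (fun j => e (c + j)%Z) (zrange 0 k)).
Definition pref (r : nat) (lo : Z) (n : nat) : bool :=
  andb (Nat.leb (k - r) n) (forallb (fun j => e (lo + j)%Z) (zrange 0 (k - r))).

Lemma forallb_map_gen {A B0} (f : B0 -> bool) (g : A -> B0) l : forallb f (map g l) = forallb (fun x => f (g x)) l.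
Proof. induction l; simpl; auto. rewrite IHl; auto. Qed.
Lemma existsb_map_gen {A B0} (f : B0 -> bool) (g : A -> B0) l : existsb f (map g l) = existsb (fun x => f (g x)) l.
Proof. induction l; simpl; auto. rewrite IHl; auto. Qed.

Lemma forallb_zS (g : Z -> bool) t lo : forallb (fun j => g (lo + j)%Z) (zrange 0 (S t)) =
  andb (g lo) (forallb (fun j => g (lo + 1 + j)%Z) (zrange 0 t)).
Proof. rewrite zrange_S. simpl. rewrite Z.add_0_r. f_equal.
 rewrite (zrange_shift 1), forallb_map_gen. apply forallb_ext_in. intros. f_equal. lia. Qed.

Lemma forallb_sub (g : Z -> bool) t t' lo : (t' <= t)%nat ->
  forallb (fun j => g (lo + j)%Z) (zrange 0 t) = true -> forallb (fun j => g (lo + j)%Z) (zrange 0 t') = true.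
Proof. intros Ht H. rewrite forallb_forall in *. intros x Hx. apply H. rewrite In_zrange in *. lia. Qed.

Lemma kc_main : forall n lo r, (r < k)%nat -> (lo + Z.of_nat n = hi)%Z ->
  NRun k r (map e (zrange lo n)) = negb (orb (pref r lo n) (existsb Wn (zrange lo n))).
Proof.
 induction n; intros lo r Hr Hhi.
 - simpl. unfold pref. replace (Nat.leb (k - r) 0) with false; auto.
   symmetry. apply Nat.leb_gt. lia.
 - rewrite zrange_S. simpl map. simpl existsb. unfold NRun; fold NRun.
   assert (Hhi' : (lo + 1 + Z.of_nat n = hi)%Z) by lia.
   destruct (e lo) eqn:Elo.
   + destruct (Nat.ltb (S r) k) eqn:Ek.
     * apply Nat.ltb_lt in Ek. rewrite IHn by (auto; lia). f_equal.
       assert (Hp : pref r lo (S n) = pref (S r) (lo + 1) n).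
       { unfold pref. replace (k - r)%nat with (S (k - S r)) by lia.
         rewrite forallb_zS, Elo. simpl andb. reflexivity. }
       rewrite Hp. destruct (pref (S r) (lo+1) n) eqn:Ep; simpl; auto.
       destruct (Wn lo) eqn:Ew; simpl; auto.
       exfalso. assert (Ep2 : pref r lo (S n) = false) by (rewrite Hp; auto). clear Ep Hp.
       unfold Wn in Ew. unfold pref in Ep2.
       apply Bool.andb_true_iff in Ew. destruct Ew as [E1 E2].
       assert (H : forallb (fun j => e (lo + j)%Z) (zrange 0 (k - r)) = true) by (eapply forallb_sub; [|eauto]; lia).
       rewrite H in Ep2. apply Z.leb_le in E1.
       assert (H0 : Nat.leb (k - r) (S n) = true) by (apply Nat.leb_le; lia). rewrite H0 in Ep2. discriminate.
     * apply Nat.ltb_ge in Ek. assert (r = k - 1)%nat by lia.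
       unfold pref. replace (k - r)%nat with 1%nat by lia. simpl. rewrite Z.add_0_r, Elo. simpl. auto.
   + rewrite IHn by (auto; lia).
     assert (Hw : Wn lo = false).
     { unfold Wn. replace (zrange 0 k) with (zrange 0 (S (k-1))) by (f_equal; lia). rewrite forallb_zS, Elo. apply Bool.andb_false_r. }
     assert (Hp : pref r lo (S n) = false).
     { unfold pref. replace (k - r)%nat with (S (k - S r)) by lia. rewrite forallb_zS, Elo. apply Bool.andb_false_r. }
     rewrite Hw, Hp. simpl. f_equal.
     destruct (pref 0 (lo + 1) n) eqn:Ep; simpl; auto.
     symmetry. apply existsb_exists. exists (lo + 1)%Z. split.
     * unfold pref in Ep. apply Bool.andb_true_iff in Ep. destruct Ep as [E1 _]. apply Nat.leb_le in E1.
       apply In_zrange. lia.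
     * unfold pref in Ep. apply Bool.andb_true_iff in Ep. destruct Ep as [E1 E2]. apply Nat.leb_le in E1.
       rewrite Nat.sub_0_r in *. unfold Wn. rewrite E2. rewrite Bool.andb_true_r. apply Z.leb_le. lia.
Qed.
End KC.

Lemma kconsec_NRun k e lo n : (1 <= k)%nat ->
  negb (kconsec k e lo (lo + Z.of_nat n)) = NRun k 0 (map e (zrange lo n)).
Proof.
 intro Hk. rewrite (kc_main k e (lo + Z.of_nat n) Hk n lo 0) by lia.
 unfold kconsec, zint. replace (lo + Z.of_nat n - lo)%Z with (Z.of_nat n) by lia. rewrite Nat2Z.id.
 f_equal. fold (Wn k e (lo + Z.of_nat n)).
 destruct (pref k e 0 lo n) eqn:Ep; simpl; auto.
 apply (proj2 (existsb_exists _ _)). exists lo. unfold pref in Ep. apply Bool.andb_true_iff in Ep.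
 destruct Ep as [E1 E2]. apply Nat.leb_le in E1. rewrite Nat.sub_0_r in *. split.
 - apply In_zrange. lia.
 - unfold Wn. rewrite E2, Bool.andb_true_r. apply Z.leb_le. lia.
Qed.

Open Scope R_scope.

Definition grid (xs ys : list Z) : list (Z*Z) := flat_map (fun c => map (fun y => (c, y)) ys) xs.
Definition gridr (xs ys : list Z) : list (Z*Z) := flat_map (fun r => map (fun x => (x, r)) xs) ys.

Lemma In_grid p xs ys : In p (grid xs ys) <-> In (fst p) xs /\ In (snd p) ys.
Proof. unfold grid. rewrite in_flat_map. split.
 - intros [c [Hc Hp]]. apply in_map_iff in Hp. destruct Hp as [y [<- Hy]]. simpl; auto.
 - destruct p as [x y]; simpl. intros [Hx Hy]. exists x. split; auto. apply in_map; auto. Qed.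

Lemma In_gridr p xs ys : In p (gridr xs ys) <-> In (fst p) xs /\ In (snd p) ys.
Proof. unfold gridr. rewrite in_flat_map. split.
 - intros [c [Hc Hp]]. apply in_map_iff in Hp. destruct Hp as [y [<- Hy]]. simpl; auto.
 - destruct p as [x y]; simpl. intros [Hx Hy]. exists y. split; auto. apply in_map with (f := fun x => (x, y)); auto. Qed.

Lemma NoDup_grid xs ys : NoDup xs -> NoDup ys -> NoDup (grid xs ys).
Proof. intros Hx Hy. induction xs as [|c xs IH]; simpl; [constructor|]. inversion Hx; subst.
 apply NoDup_app; auto.
 - apply NoDup_map_inj; auto. intros. congruence.
 - intros p Hp Hp'. apply in_map_iff in Hp. destruct Hp as [y [<- _]]. apply In_grid in Hp'. simpl in Hp'. tauto. Qed.

Lemma NoDup_gridr xs ys : NoDup xs -> NoDup ys -> NoDup (gridr xs ys).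
Proof. intros Hx Hy. induction ys as [|c ys IH]; simpl; [constructor|]. inversion Hy; subst.
 apply NoDup_app; auto.
 - apply NoDup_map_inj; auto. intros. congruence.
 - intros p Hp Hp'. apply in_map_iff in Hp. destruct Hp as [y [<- _]]. apply In_gridr in Hp'. simpl in Hp'. tauto. Qed.

Lemma list_prod_grid xs ys : list_prod xs ys = grid xs ys.
Proof. induction xs; simpl; auto. rewrite IHxs. auto. Qed.

Lemma length_grid xs ys : length (grid xs ys) = (length xs * length ys)%nat.
Proof. induction xs; simpl; auto. rewrite length_app, length_map, IHxs. auto. Qed.

Lemma indep_of_depon {A} (F : config -> A) (P : Z*Z -> Prop) s :
  (forall w w', (forall p, P p -> w p = w' p) -> F w = F w') ->
  (forall p, In p s -> ~ P p) -> indep F s.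
Proof. intros. eapply depon_indep; eauto. Qed.

Lemma indep_map {A} (g : config -> Z -> A) lines s :
  (forall i, In i lines -> indep (fun w => g w i) s) -> indep (fun w => map (g w) lines) s.
Proof. intros H w p v Hp. apply map_ext_in. intros i Hi. apply (H i Hi w p v Hp). Qed.

Lemma indep_comp {A B0} (G : config -> A) (F : A -> B0) s : indep G s -> indep (fun w => F (G w)) s.
Proof. intros H w p v Hp. rewrite (H w p v Hp). auto. Qed.

Lemma indep_mul (F G : config -> R) s : indep F s -> indep G s -> indep (fun w => F w * G w) s.
Proof. intros H1 H2 w p v Hp. rewrite H1, H2; auto. Qed.

Lemma forallb_dep (w w' : config) (g : Z -> Z*Z) l : (forall j, In j l -> w (g j) = w' (g j)) ->
  forallb (fun j => w (g j)) l = forallb (fun j => w' (g j)) l.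
Proof. intro H. apply forallb_ext_in. auto. Qed.

Definition indb (b : bool) : R := if b then 1 else 0.

Lemma ind_and a b0 : indb (andb a b0) = indb a * indb b0.
Proof. destruct a, b0; unfold indb; simpl; ring. Qed.

Lemma Hf_nonneg k p r fl : 0 <= p <= 1 -> 0 <= Hf k p r fl.
Proof. intro Hp. revert r; induction fl; intro r; simpl; [lra|].
 destruct a.
 - apply Rplus_le_le_0_compat; apply Rmult_le_pos; try lra; auto. destruct (Nat.ltb (S r) k); auto; lra.
 - auto. Qed.

Section Geo.
Variables (k : nat) (q : R) (x1 y1 : Z) (a b l1 l2 m1 m2 : nat).
Hypothesis Hk : (1 <= k)%nat.
Hypothesis Hq : 0 <= q <= 1.

Let x0 := (x1 + Z.of_nat l1)%Z.
Let y0 := (y1 + Z.of_nat m1)%Z.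
Definition XL := zrange x1 l1.
Definition XR := zrange (x1 + Z.of_nat l1) a.
Definition XT := zrange (x1 + Z.of_nat l1 + Z.of_nat a) l2.
Definition YB := zrange y1 m1.
Definition YR := zrange (y1 + Z.of_nat m1) b.
Definition YT := zrange (y1 + Z.of_nat m1 + Z.of_nat b) m2.
Definition XS := XL ++ XT.
Definition YS := YB ++ YT.

Definition sc (c y : Z) : Z*Z := (c, y).
Definition sr (r x : Z) : Z*Z := (x, r).
Definition cfc (w : config) (c : Z) : bool := forallb (fun y => w (c, y)) YS.
Definition cfr (w : config) (r : Z) : bool := forallb (fun x => w (x, r)) XS.
Definition lineC := lineE YR sc cfc.
Definition lineR := lineE XR sr cfr.

Definition DL w := NRun k 0 (map (lineC w) XL).
Definition DR w := NRun k 0 (map (lineC w) XT).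
Definition DB w := NRun k 0 (map (lineR w) YB).
Definition DT w := NRun k 0 (map (lineR w) YT).

Ltac zr := repeat (rewrite ?in_app_iff, ?In_zrange in *); simpl in *; lia.

Lemma xs_split : zrange x1 (a + (l1 + l2)) = XL ++ XR ++ XT.
Proof. replace (a + (l1 + l2))%nat with (l1 + (a + l2))%nat by lia.
 rewrite !zrange_app. unfold XL, XR, XT. reflexivity. Qed.

Lemma ys_split : zrange y1 (b + (m1 + m2)) = YB ++ YR ++ YT.
Proof. replace (b + (m1 + m2))%nat with (m1 + (b + m2))%nat by lia.
 rewrite !zrange_app. reflexivity. Qed.

Lemma col_eq w c : col_empty w (zrange y1 (b + (m1 + m2))) c = lineC w c.
Proof. unfold col_empty, lineC, lineE, cfc, YS, sc. rewrite ys_split, !forallb_app.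
 destruct (forallb (fun y => w (c, y)) YB), (forallb (fun y => w (c, y)) YR), (forallb (fun y => w (c, y)) YT); reflexivity. Qed.

Lemma row_eq w r : row_empty w (zrange x1 (a + (l1 + l2))) r = lineR w r.
Proof. unfold row_empty, lineR, lineE, cfr, XS, sr. rewrite xs_split, !forallb_app.
 destruct (forallb (fun x => w (x, r)) XL), (forallb (fun x => w (x, r)) XR), (forallb (fun x => w (x, r)) XT); reflexivity. Qed.

Lemma D_eq w : D_event k x0 y0 x1 y1 a b (l1 + l2) (m1 + m2) w = andb (andb (andb (DL w) (DR w)) (DB w)) (DT w).
Proof.
 unfold D_event. unfold x0, y0.
 replace (x1 + Z.of_nat (a + (l1 + l2)))%Z with (x1 + Z.of_nat l1 + Z.of_nat a + Z.of_nat l2)%Z by lia.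
 replace (y1 + Z.of_nat (b + (m1 + m2)))%Z with (y1 + Z.of_nat m1 + Z.of_nat b + Z.of_nat m2)%Z by lia.
 rewrite !kconsec_NRun by auto.
 unfold DL, DR, DB, DT.
 repeat rewrite (map_ext _ (lineC w) (fun c => col_eq w c)).
 repeat rewrite (map_ext _ (lineR w) (fun c => row_eq w c)).
 reflexivity.
Qed.

Lemma lineC_dep c w w' : (forall p, fst p = c -> w p = w' p) -> lineC w c = lineC w' c.
Proof. intro H. unfold lineC, lineE, cfc, sc. f_equal; apply forallb_ext_in; intros; apply H; reflexivity. Qed.
Lemma lineR_dep r w w' : (forall p, snd p = r -> w p = w' p) -> lineR w r = lineR w' r.
Proof. intro H. unfold lineR, lineE, cfr, sr. f_equal; apply forallb_ext_in; intros; apply H; reflexivity. Qed.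
Lemma cfc_dep c w w' : (forall p, fst p = c /\ In (snd p) YS -> w p = w' p) -> cfc w c = cfc w' c.
Proof. intro H. unfold cfc. apply forallb_ext_in; intros; apply H; simpl; auto. Qed.
Lemma cfr_dep r w w' : (forall p, snd p = r /\ In (fst p) XS -> w p = w' p) -> cfr w r = cfr w' r.
Proof. intro H. unfold cfr. apply forallb_ext_in; intros; apply H; simpl; auto. Qed.

Definition corners := grid XS YS.
Definition colL := grid XL YR.
Definition colR := grid XT YR.
Definition rowB := gridr XR YB.
Definition rowT := gridr XR YT.
Definition inter := grid XR YR.

Ltac regn := unfold XS, YS in *; unfold XL, XR, XT, YB, YR, YT in *; zr.
Ltac ptac := let p := fresh "p" in let Hp := fresh "Hp" in let HP := fresh "HP" in
  intros p Hp HP; first [apply In_grid in Hp | apply In_gridr in Hp]; destruct p; simpl in *; regn.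

Lemma indC (lines : list Z) s : (forall c p, In c lines -> In p s -> fst p <> c) ->
  indep (fun w => map (lineC w) lines) s.
Proof. intro H. apply indep_map. intros i Hi. eapply indep_of_depon.
 - intros w w' Hw. apply (lineC_dep i w w' Hw).
 - intros p Hp. apply (H i p Hi Hp). Qed.
Lemma indR (lines : list Z) s : (forall c p, In c lines -> In p s -> snd p <> c) ->
  indep (fun w => map (lineR w) lines) s.
Proof. intro H. apply indep_map. intros i Hi. eapply indep_of_depon.
 - intros w w' Hw. apply (lineR_dep i w w' Hw).
 - intros p Hp. apply (H i p Hi Hp). Qed.
Lemma indCf (lines : list Z) s : (forall c p, In c lines -> In p s -> ~ (fst p = c /\ In (snd p) YS)) ->
  indep (fun w => map (cfc w) lines) s.
Proof. intro H. apply indep_map. intros i Hi. eapply indep_of_depon.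
 - intros w w' Hw. apply (cfc_dep i w w' Hw).
 - intros p Hp. apply (H i p Hi Hp). Qed.
Lemma indRf (lines : list Z) s : (forall c p, In c lines -> In p s -> ~ (snd p = c /\ In (fst p) XS)) ->
  indep (fun w => map (cfr w) lines) s.
Proof. intro H. apply indep_map. intros i Hi. eapply indep_of_depon.
 - intros w w' Hw. apply (cfr_dep i w w' Hw).
 - intros p Hp. apply (H i p Hi Hp). Qed.

Ltac ctac := intros ? [? ?] Hc Hp; first [apply In_grid in Hp | apply In_gridr in Hp]; simpl in *; regn.

Definition HL w := Hf k (q ^ b) 0 (map (cfc w) XL).
Definition HR w := Hf k (q ^ b) 0 (map (cfc w) XT).
Definition HB w := Hf k (q ^ a) 0 (map (cfr w) YB).
Definition HT w := Hf k (q ^ a) 0 (map (cfr w) YT).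

Lemma S1 w : EL q inter (fun w => indb (D_event k x0 y0 x1 y1 a b (l1 + l2) (m1 + m2) w)) w =
  indb (DL w) * indb (DR w) * indb (DB w) * indb (DT w).
Proof.
 rewrite (EL_ext q inter _ (fun w => indb (DL w) * indb (DR w) * indb (DB w) * indb (DT w))).
 2:{ intro w'. rewrite D_eq, !ind_and. auto. }
 apply EL_indep. unfold DL, DR, DB, DT.
 repeat apply indep_mul; apply indep_comp with (F := fun l => indb (NRun k 0 l)).
 - apply indC. unfold inter. ctac.
 - apply indC. unfold inter. ctac.
 - apply indR. unfold inter. ctac.
 - apply indR. unfold inter. ctac.
Qed.

Lemma LC lines w : NoDup lines ->
  EL q (grid lines YR) (fun w => indb (NRun k 0 (map (lineC w) lines))) w = Hf k (q ^ b) 0 (map (cfc w) lines).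
Proof.
 intro Hnd. pose proof (Line_EL k q YR sc cfc Hq (NoDup_zrange _ _)) as HL0.
 replace (length YR) with b in HL0 by (unfold YR; symmetry; apply length_zrange). assert (h1 : forall i j i' j' : Z, sc i j = sc i' j' -> i = i' /\ j = j') by (intros i j i' j' E; unfold sc in E; inversion E; auto).
 assert (h2 : forall (w : config) (i j : Z) (v : bool) (i' : Z), In j YR -> cfc (upd w (sc i j) v) i' = cfc w i').
 { intros w0 i j v i' Hj. apply cfc_dep. intros p [Hp1 Hp2]. apply upd_other. intro E; subst.
   unfold sc, sr in *; simpl in Hp2. regn. }
 rewrite <- (HL0 h1 h2 lines 0%nat w Hnd). reflexivity.
Qed.

Lemma LR lines w : NoDup lines ->
  EL q (gridr XR lines) (fun w => indb (NRun k 0 (map (lineR w) lines))) w = Hf k (q ^ a) 0 (map (cfr w) lines).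
Proof.
 intro Hnd. pose proof (Line_EL k q XR sr cfr Hq (NoDup_zrange _ _)) as HL0.
 replace (length XR) with a in HL0 by (unfold XR; symmetry; apply length_zrange). assert (h1 : forall i j i' j' : Z, sr i j = sr i' j' -> i = i' /\ j = j') by (intros i j i' j' E; unfold sr in E; inversion E; auto).
 assert (h2 : forall (w : config) (i j : Z) (v : bool) (i' : Z), In j XR -> cfr (upd w (sr i j) v) i' = cfr w i').
 { intros w0 i j v i' Hj. apply cfr_dep. intros p [Hp1 Hp2]. apply upd_other. intro E; subst.
   unfold sc, sr in *; simpl in Hp2. regn. }
 rewrite <- (HL0 h1 h2 lines 0%nat w Hnd). reflexivity.
Qed.

Lemma S2 w : EL q rowT (fun w => indb (DL w) * indb (DR w) * indb (DB w) * indb (DT w)) w =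
  indb (DL w) * indb (DR w) * indb (DB w) * HT w.
Proof.
 rewrite EL_mul_l.
 - f_equal. apply LR. apply NoDup_zrange.
 - unfold DL, DR, DB. repeat apply indep_mul; apply indep_comp with (F := fun l => indb (NRun k 0 l)).
   + apply indC. unfold rowT. ctac.
   + apply indC. unfold rowT. ctac.
   + apply indR. unfold rowT. ctac.
Qed.

Lemma S3 w : EL q rowB (fun w => indb (DL w) * indb (DR w) * indb (DB w) * HT w) w =
  indb (DL w) * indb (DR w) * HB w * HT w.
Proof.
 rewrite (EL_ext q rowB _ (fun w => (indb (DL w) * indb (DR w) * HT w) * indb (DB w))) by (intro; ring).
 rewrite EL_mul_l.
 - unfold rowB, DB. rewrite LR by apply NoDup_zrange. unfold HB. ring.
 - unfold DL, DR, HT. repeat apply indep_mul.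
   + apply indep_comp with (F := fun l => indb (NRun k 0 l)). apply indC. unfold rowB. ctac.
   + apply indep_comp with (F := fun l => indb (NRun k 0 l)). apply indC. unfold rowB. ctac.
   + apply indep_comp with (F := fun l => Hf k (q^a) 0 l). apply indRf. unfold rowB. ctac.
Qed.

Lemma S4 w : EL q colR (fun w => indb (DL w) * indb (DR w) * HB w * HT w) w =
  indb (DL w) * HR w * HB w * HT w.
Proof.
 rewrite (EL_ext q colR _ (fun w => (indb (DL w) * HB w * HT w) * indb (DR w))) by (intro; ring).
 rewrite EL_mul_l.
 - unfold colR, DR. rewrite LC by apply NoDup_zrange. unfold HR. ring.
 - unfold DL, HB, HT. repeat apply indep_mul.
   + apply indep_comp with (F := fun l => indb (NRun k 0 l)). apply indC. unfold colR. ctac.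
   + apply indep_comp with (F := fun l => Hf k (q^a) 0 l). apply indRf. unfold colR. ctac.
   + apply indep_comp with (F := fun l => Hf k (q^a) 0 l). apply indRf. unfold colR. ctac.
Qed.

Lemma S5 w : EL q colL (fun w => indb (DL w) * HR w * HB w * HT w) w =
  HL w * HR w * HB w * HT w.
Proof.
 rewrite (EL_ext q colL _ (fun w => (HR w * HB w * HT w) * indb (DL w))) by (intro; ring).
 rewrite EL_mul_l.
 - unfold colL, DL. rewrite LC by apply NoDup_zrange. unfold HL. ring.
 - unfold HR, HB, HT. repeat apply indep_mul.
   + apply indep_comp with (F := fun l => Hf k (q^b) 0 l). apply indCf. unfold colL. ctac.
   + apply indep_comp with (F := fun l => Hf k (q^a) 0 l). apply indRf. unfold colL. ctac.
   + apply indep_comp with (F := fun l => Hf k (q^a) 0 l). apply indRf. unfold colL. ctac.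
Qed.

Definition big := corners ++ colL ++ colR ++ rowB ++ rowT ++ inter.

Ltac memb := repeat (first [rewrite In_grid in * | rewrite In_gridr in *]).
Ltac disj := let p := fresh "p" in let H1 := fresh in let H2 := fresh in
  intros p H1 H2; unfold corners, colL, colR, rowB, rowT, inter in *; repeat rewrite in_app_iff in H1; repeat rewrite in_app_iff in H2;
  memb; destruct p; simpl in *; regn.

Lemma NoDup_XS : NoDup XS.
Proof. apply NoDup_app; try apply NoDup_zrange. intros x H1 H2. regn. Qed.
Lemma NoDup_YS : NoDup YS.
Proof. apply NoDup_app; try apply NoDup_zrange. intros x H1 H2. regn. Qed.

Lemma NoDup_big : NoDup big.
Proof.
 unfold big. repeat apply NoDup_app.
 all: try (apply NoDup_grid || apply NoDup_gridr); try apply NoDup_zrange; try apply NoDup_XS; try apply NoDup_YS.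
 all: disj.
Qed.

Lemma perm_big : Permutation (grid (XL ++ XR ++ XT) (YB ++ YR ++ YT)) big.
Proof.
 apply NoDup_Permutation.
 - rewrite <- xs_split, <- ys_split. apply NoDup_grid; apply NoDup_zrange.
 - apply NoDup_big.
 - intros [x y]. unfold big, corners, colL, colR, rowB, rowT, inter. repeat rewrite in_app_iff. memb. simpl.
   repeat rewrite in_app_iff. unfold XS, YS. unfold XL, XR, XT, YB, YR, YT. repeat rewrite in_app_iff.
   rewrite !In_zrange. lia.
Qed.

Lemma decomp_prob :
  probL q (sites_of x1 y1 a b (l1 + l2) (m1 + m2)) (D_event k x0 y0 x1 y1 a b (l1 + l2) (m1 + m2)) (fun _ => false)
  = EL q corners (fun w => HL w * HR w * HB w * HT w) (fun _ => false).
Proof.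
 rewrite probL_EL. unfold sites_of. rewrite xs_split, ys_split, list_prod_grid.
 rewrite (EL_perm _ _ _ _ _ perm_big). unfold big. rewrite !EL_app.
 apply EL_ext. intro w1. rewrite <- S5, EL_app. apply EL_ext. intro w2.
 rewrite <- S4, EL_app. apply EL_ext. intro w3. rewrite <- S3, EL_app. apply EL_ext. intro w4.
 rewrite <- S2, EL_app. apply EL_ext. intro w5. rewrite <- S1. reflexivity.
Qed.

Lemma nbf_app' l l' : nbf (l ++ l') = (nbf l + nbf l')%nat.
Proof. induction l; simpl; auto. rewrite IHl. lia. Qed.

Lemma nbf_perm l l' : Permutation l l' -> nbf l = nbf l'.
Proof. intro H; induction H; simpl; auto; try lia. Qed.

Lemma forallb_nbf {A0} (g : A0 -> bool) l : forallb g l = false -> (1 <= nbf (map g l))%nat.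
Proof. induction l; simpl; [discriminate|]. destruct (g a0); simpl; auto. lia. Qed.

Lemma cnt_cols w xs : (nbf (map (cfc w) xs) <= nbf (map w (grid xs YS)))%nat.
Proof. induction xs; simpl; auto. rewrite map_app, nbf_app', map_map.
 unfold cfc at 1. destruct (forallb (fun y => w (a0, y)) YS) eqn:E; simpl.
 - lia.
 - pose proof (forallb_nbf _ _ E). lia. Qed.

Lemma cnt_rows w ys : (nbf (map (cfr w) ys) <= nbf (map w (gridr XS ys)))%nat.
Proof. induction ys; simpl; auto. rewrite map_app, nbf_app', map_map.
 unfold cfr at 1. destruct (forallb (fun x => w (x, a0)) XS) eqn:E; simpl.
 - lia.
 - pose proof (forallb_nbf _ _ E). lia. Qed.

Lemma perm_corners : Permutation (gridr XS YS) corners.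
Proof. apply NoDup_Permutation.
 - apply NoDup_gridr; [apply NoDup_XS|apply NoDup_YS].
 - apply NoDup_grid; [apply NoDup_XS|apply NoDup_YS].
 - intro p. unfold corners. rewrite In_grid, In_gridr. tauto. Qed.

Lemma EL_prod s c w0 : NoDup s ->
  EL q s (fun w => exp (INR (nbf (map w s)) * c)) w0 = (q + (1 - q) * exp c) ^ length s.
Proof.
 revert w0. induction s as [|p s IH]; intros w0 Hnd; simpl.
 - rewrite Rmult_0_l, exp_0. auto.
 - inversion Hnd; subst.
   assert (E : forall v, EL q s (fun w => exp (INR ((if w p then 0 else 1) + nbf (map w s)) * c)) (upd w0 p v)
       = (if v then 1 else exp c) * (q + (1 - q) * exp c) ^ length s).
   { intro v. rewrite (EL_ext q s _ (fun w => exp (INR (if w p then 0 else 1) * c) * exp (INR (nbf (map w s)) * c))).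
     2:{ intro w. rewrite <- exp_plus, plus_INR. f_equal. ring. }
     rewrite EL_mul_l.
     - rewrite IH by auto. rewrite upd_same. destruct v; simpl; [rewrite Rmult_0_l, exp_0|rewrite Rmult_1_l]; auto.
     - intros w p' v' Hp'. rewrite upd_other; auto. intro; subst; auto. }
   rewrite !E. simpl. ring.
Qed.

Variables (lfa lfb : R).
Hypothesis Hla : lfa <= 0.
Hypothesis Hlb : lfb <= 0.
Hypothesis HDa : Dsum (q ^ a) (exp lfa) k <= 1.
Hypothesis HDb : Dsum (q ^ b) (exp lfb) k <= 1.

Lemma qpow_01 n : 0 <= q ^ n <= 1.
Proof. split; [apply pow_le; lra|]. induction n; simpl; [lra|]. assert (0 <= q ^ n) by (apply pow_le; lra). nra. Qed.

Lemma bound_main :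
  EL q corners (fun w => HL w * HR w * HB w * HT w) (fun _ => false) <=
  exp ((INR (l1 + l2) - 2 * (INR k - 1)) * lfb + (INR (m1 + m2) - 2 * (INR k - 1)) * lfa) *
  (q + (1 - q) * exp (- INR k * (lfa + lfb))) ^ ((l1 + l2) * (m1 + m2)).
Proof.
 set (Cc := exp ((INR (l1 + l2) - 2 * (INR k - 1)) * lfb + (INR (m1 + m2) - 2 * (INR k - 1)) * lfa)).
 set (c := - INR k * (lfa + lfb)).
 eapply Rle_trans.
 - apply EL_mono with (Y := fun w => Cc * exp (INR (nbf (map w corners)) * c)); auto.
   intro w.
   pose proof (Hf_bound k (q^b) lfb Hk (qpow_01 b) Hlb HDb (map (cfc w) XL)) as B1.
   pose proof (Hf_bound k (q^b) lfb Hk (qpow_01 b) Hlb HDb (map (cfc w) XT)) as B2.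
   pose proof (Hf_bound k (q^a) lfa Hk (qpow_01 a) Hla HDa (map (cfr w) YB)) as B3.
   pose proof (Hf_bound k (q^a) lfa Hk (qpow_01 a) Hla HDa (map (cfr w) YT)) as B4.
   unfold HL, HR, HB, HT.
   pose proof (Hf_nonneg k (q^b) 0 (map (cfc w) XL) (qpow_01 b)).
   pose proof (Hf_nonneg k (q^b) 0 (map (cfc w) XT) (qpow_01 b)).
   pose proof (Hf_nonneg k (q^a) 0 (map (cfr w) YB) (qpow_01 a)).
   pose proof (Hf_nonneg k (q^a) 0 (map (cfr w) YT) (qpow_01 a)).
   eapply Rle_trans.
   { apply Rmult_le_compat; [repeat apply Rmult_le_pos; auto|auto| |exact B4].
     apply Rmult_le_compat; [repeat apply Rmult_le_pos; auto|auto| |exact B3].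
     apply Rmult_le_compat; auto; [exact B1|exact B2]. }
   unfold Ebd. rewrite <- !exp_plus. unfold Cc. rewrite <- exp_plus. apply exp_mono.
   rewrite !length_map. unfold XL, XT, YB, YR, YT. rewrite !length_zrange.
   pose proof (cnt_cols w XS) as C1. pose proof (cnt_rows w YS) as C2.
   rewrite (nbf_perm _ _ (Permutation_map w perm_corners)) in C2.
   fold corners in C1. unfold XS, YS in C1, C2. rewrite map_app, nbf_app' in C1, C2.
   fold XL XT YB YT in *.
   set (N := nbf (map w corners)) in *.
   apply le_INR in C1. apply le_INR in C2. rewrite plus_INR in C1, C2.
   rewrite !plus_INR. unfold c.
   assert (0 <= INR k) by apply pos_INR.
   set (n1 := INR (nbf (map (cfc w) XL))) in *. set (n2 := INR (nbf (map (cfc w) XT))) in *.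
   set (n3 := INR (nbf (map (cfr w) YB))) in *. set (n4 := INR (nbf (map (cfr w) YT))) in *.
   assert (INR k * (n1 + n2) * lfb >= INR k * INR N * lfb).
   { apply Rle_ge. replace (INR k * (n1 + n2) * lfb) with ((INR k * lfb) * (n1 + n2)) by ring.
     replace (INR k * INR N * lfb) with ((INR k * lfb) * INR N) by ring.
     apply Rmult_le_compat_neg_l; [nra|lra]. }
   assert (INR k * (n3 + n4) * lfa >= INR k * INR N * lfa).
   { apply Rle_ge. replace (INR k * (n3 + n4) * lfa) with ((INR k * lfa) * (n3 + n4)) by ring.
     replace (INR k * INR N * lfa) with ((INR k * lfa) * INR N) by ring.
     apply Rmult_le_compat_neg_l; [nra|lra]. }
   nra.
 - rewrite EL_mul_l by (intros ? ? ? ?; auto). rewrite EL_prod.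
   + unfold corners. rewrite length_grid. unfold XS, YS. rewrite !length_app.
     unfold XL, XT, YB, YT. rewrite !length_zrange. right. repeat f_equal; lia.
   + apply NoDup_grid; [apply NoDup_XS|apply NoDup_YS].
Qed.
End Geo.

Lemma Sxy_lb u y t : 0 <= u <= y -> u * Sxy u y t >= INR t * u ^ t.
Proof. intro H. induction t; simpl Sxy; [simpl; lra|]. rewrite S_INR. simpl pow.
 assert (0 <= u^t) by (apply pow_le; lra).
 assert (INR t * u^t >= 0) by (apply Rle_ge, Rmult_le_pos; [apply pos_INR|auto]).
 replace (u * (u ^ t + y * Sxy u y t)) with (u * u^t + y * (u * Sxy u y t)) by ring.
 assert (y * (u * Sxy u y t) >= y * (INR t * u^t)) by (apply Rle_ge, Rmult_le_compat_l; lra).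
 assert (y * (INR t * u^t) >= u * (INR t * u^t)) by (apply Rle_ge, Rmult_le_compat_r; lra).
 nra. Qed.

Lemma fk_fixed k f x : (1 <= k)%nat -> is_fk k f -> 0 < x < 1 -> f x = x -> INR k * (1 - x) <= x.
Proof.
 intros Hk [Hr [Hd Hid]] Hx Hfx.
 destruct (Rle_lt_dec (INR k * (1 - x)) x) as [|Hc]; auto. exfalso.
 set (K := INR k) in *. assert (HK : 1 <= K) by (apply (le_INR 1); auto).
 set (y := (x + K/(K+1))/2).
 assert (Ht : K / (K+1) * (K+1) = K) by (field; lra).
 assert (Hxt : x * (K+1) < K) by lra.
 assert (Hty : K/(K+1) < 1) by (apply Rmult_lt_reg_r with (K+1); lra).
 assert (Hyt : y * (K+1) < K) by (unfold y; nra).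
 assert (Hxy : x < y) by (unfold y; nra).
 assert (Hy1 : y < 1) by (unfold y; lra).
 assert (Hy0 : 0 <= y <= 1) by lra.
 assert (Hu : f y < x) by (rewrite <- Hfx; apply Hd; lra).
 destruct (Hr y Hy0) as [Hu0 _].
 set (u := f y) in *.
 pose proof (Hid y Hy0) as Hh. fold u in Hh.
 assert (Hyk : 0 < y^k) by (apply pow_lt; lra).
 destruct (Req_dec u 0) as [E|E].
 - rewrite E in Hh. rewrite !pow_i in Hh by lia. rewrite pow_add in Hh. simpl in Hh. nra.
 - set (T := Sxy u y k).
   assert (H1 : (y - u) * T = y^k - u^k).
   { unfold T. replace (y - u) with (-(u - y)) by ring. rewrite Ropp_mult_distr_l_reverse, Sxy_diff. ring. }
   assert (H2 : (y - u) * (u^k + y * T) = y^(k+1) - u^(k+1)).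
   { unfold T. replace (u^k + y * Sxy u y k) with (Sxy u y (S k)) by reflexivity.
     replace (y - u) with (-(u - y)) by ring. rewrite Ropp_mult_distr_l_reverse, Sxy_diff.
     rewrite Nat.add_1_r. ring. }
   assert (H3 : u * T >= K * u^k) by (apply Sxy_lb; lra).
   assert (Hupos : 0 < u) by lra.
   assert (Huk : 0 < u^k) by (apply pow_lt; lra).
   assert (H4 : (1 - y) * K > u) by nra.
   assert (H5 : u * ((1-y) * T) > u * u^k).
   { replace (u * ((1-y) * T)) with ((1-y) * (u * T)) by ring.
     apply Rge_gt_trans with ((1-y) * (K * u^k)). apply Rle_ge, Rmult_le_compat_l; lra. nra. }
   assert (H6 : (1-y) * T > u^k) by (apply Rmult_gt_reg_l with u; auto).
   assert ((y - u) * ((1-y) * T - u^k) > 0) by (apply Rmult_gt_0_compat; lra).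
   assert ((y - u) * ((1-y) * T - u^k) = (y^k - y^(k+1)) - (u^k - u^(k+1))) by nra.
   lra.
Qed.

Lemma fk_pos k f x : is_fk k f -> 0 <= x < 1 -> 0 < f x <= 1.
Proof. intros [Hr [Hd _]] Hx. destruct (Hr 1 ltac:(lra)). destruct (Hr x ltac:(lra)).
 split; auto. apply Rle_lt_trans with (f 1); auto. apply Hd; lra. Qed.

Lemma fk_D k f p : (1 <= k)%nat -> is_fk k f -> 0 < p < 1 -> Dsum p (exp (ln (f p))) k <= 1.
Proof. intros Hk Hf Hp. destruct (fk_pos k f p Hf ltac:(lra)) as [H1 H2].
 rewrite exp_ln by auto. apply Dk_le1; auto.
 - destruct Hf as [_ [_ Hid]]. apply Hid; lra.
 - intro E. apply (fk_fixed k f p); auto.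
Qed.

Lemma exp_pow_n x n : exp x ^ n = exp (INR n * x).
Proof. induction n; [simpl; rewrite Rmult_0_l, exp_0; auto|]. rewrite S_INR. cbn [pow]. rewrite IHn, <- exp_plus. f_equal. ring. Qed.

Lemma ln_le0 x : 0 < x <= 1 -> ln x <= 0.
Proof. intro H. destruct (Req_dec x 1) as [->|]. rewrite ln_1; lra. rewrite <- ln_1. left. apply ln_increasing; lra. Qed.

Lemma qpow_lt1 q n : 0 < q < 1 -> (1 <= n)%nat -> 0 < q ^ n < 1.
Proof. intros Hq Hn. split; [apply pow_lt; lra|]. destruct n; [lia|]. simpl.
 assert (q ^ n <= 1). { clear Hn. induction n; simpl; [lra|]. assert (0 <= q^n) by (apply pow_le; lra). nra. }
 assert (0 <= q^n) by (apply pow_le; lra). nra. Qed.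

Theorem mainTheorem11 (k : nat) (f : R -> R) (s : R) (x0 y0 x1 y1 : Z) (a b l m : nat) :
  (1 <= k)%nat -> is_fk k f -> 0 < s ->
  (1 <= a)%nat -> (1 <= b)%nat ->
  (* R ⊆ R' *)
  (x1 <= x0)%Z -> (x0 + Z.of_nat a <= x1 + Z.of_nat (a + l))%Z ->
  (y1 <= y0)%Z -> (y0 + Z.of_nat b <= y1 + Z.of_nat (b + m))%Z ->
  probD s k x0 y0 x1 y1 a b l m <=
  exp (- (INR m - 2 * (INR k - 1)) * gk f (INR a * s)
       - (INR l - 2 * (INR k - 1)) * gk f (INR b * s)
       + INR l * INR m * s * exp (INR k * (gk f (INR a * s) + gk f (INR b * s)))).
Proof.
 intros Hk Hf Hs Ha Hb Hx1 Hx2 Hy1 Hy2.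
 assert (Hl : exists l1 l2, l = (l1 + l2)%nat /\ x0 = (x1 + Z.of_nat l1)%Z).
 { exists (Z.to_nat (x0 - x1)), (l - Z.to_nat (x0 - x1))%nat. split; lia. }
 assert (Hm : exists m1 m2, m = (m1 + m2)%nat /\ y0 = (y1 + Z.of_nat m1)%Z).
 { exists (Z.to_nat (y0 - y1)), (m - Z.to_nat (y0 - y1))%nat. split; lia. }
 destruct Hl as [l1 [l2 [-> ->]]]. destruct Hm as [m1 [m2 [-> ->]]].
 set (q := exp (- s)).
 assert (Hq : 0 < q < 1).
 { split; [apply exp_pos|]. unfold q. rewrite <- exp_0. apply exp_increasing. lra. }
 assert (Hqa : 0 < q ^ a < 1) by (apply qpow_lt1; auto).
 assert (Hqb : 0 < q ^ b < 1) by (apply qpow_lt1; auto).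
 destruct (fk_pos k f (q^a) Hf ltac:(lra)) as [Hfa1 Hfa2].
 destruct (fk_pos k f (q^b) Hf ltac:(lra)) as [Hfb1 Hfb2].
 set (lfa := ln (f (q ^ a))). set (lfb := ln (f (q ^ b))).
 assert (Hla : lfa <= 0) by (apply ln_le0; auto).
 assert (Hlb : lfb <= 0) by (apply ln_le0; auto).
 assert (HDa : Dsum (q ^ a) (exp lfa) k <= 1) by (apply fk_D; auto).
 assert (HDb : Dsum (q ^ b) (exp lfb) k <= 1) by (apply fk_D; auto).
 unfold probD. fold q.
 rewrite (decomp_prob k q x1 y1 a b l1 l2 m1 m2 Hk ltac:(lra)).
 eapply Rle_trans; [apply (bound_main k q x1 y1 a b l1 l2 m1 m2 Hk ltac:(lra) lfa lfb); auto|].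
 assert (Ega : gk f (INR a * s) = - lfa).
 { unfold gk, lfa. f_equal. f_equal. f_equal. unfold q. rewrite exp_pow_n. f_equal. ring. }
 assert (Egb : gk f (INR b * s) = - lfb).
 { unfold gk, lfb. f_equal. f_equal. f_equal. unfold q. rewrite exp_pow_n. f_equal. ring. }
 rewrite Ega, Egb.
 set (Gc := exp (- INR k * (lfa + lfb))).
 replace (exp (INR k * (- lfa + - lfb))) with Gc by (unfold Gc; f_equal; ring).
 assert (HG : 0 < Gc) by apply exp_pos.
 set (N := ((l1 + l2) * (m1 + m2))%nat).
 assert (H1 : (q + (1 - q) * Gc) ^ N <= exp ((1 - q) * (Gc - 1)) ^ N).
 { apply pow_incr. split; [nra|]. pose proof (exp_ineq1_le ((1 - q) * (Gc - 1))). lra. }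
 rewrite exp_pow_n in H1.
 assert (Hqs : 1 - q <= s) by (unfold q; pose proof (exp_ineq1_le (- s)); lra).
 assert (H2 : INR N * ((1 - q) * (Gc - 1)) <= INR (l1 + l2) * INR (m1 + m2) * s * Gc).
 { unfold N. rewrite mult_INR.
   assert (0 <= INR (l1 + l2) * INR (m1 + m2)) by (apply Rmult_le_pos; apply pos_INR).
   replace (INR (l1 + l2) * INR (m1 + m2) * s * Gc) with (INR (l1 + l2) * INR (m1 + m2) * (s * Gc)) by ring.
   apply Rmult_le_compat_l; auto. nra. }
 apply exp_mono in H2.
 eapply Rle_trans.
 { apply Rmult_le_compat_l; [left; apply exp_pos|]. eapply Rle_trans; [apply H1|apply H2]. }
 rewrite <- exp_plus. apply exp_mono. right. ring.
Qed.
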